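(* Let $P_t$ be the current population of the $(\mu+1)$ EA with genotypic clearing (clearing radius $\sigma$, niche capacity $\kappa$, population size $\mu$, with $1\le\kappa<\mu$) on any fitness function, such that the only winners in $P_t$ are $\kappa$ copies of some $x^*\in\{0,1\}^n$ and $H(x,x^* )<\sigma$ for all $x\in P_t$. Let $\varphi(P)=\sum_{x\in P}H(x,x^* )$. Then if no winner different from $x^*$ is created, the expected change of the potential is \[ \mathrm{E}\big[\varphi(P_{t+1})-\varphi(P_t)\mid P_t\big]=1-\frac{\varphi(P_t)}{\mu}\left(\frac{2}{n}+\frac{\kappa}{\mu-\kappa}\right). \]
   Context: $H(x,y)$ denotes the Hamming distance; populations are multisets and the sum defining $\varphi$ runs over all members with multiplicity. The $(\mu+1)$ EA with clearing (population size $\mu$, clearing radius $\sigma$, niche capacity $\kappa$, distance function $\mathrm{d}$), for a fitness function with positive values on $\{0,1\}^n$: $P_0$ consists of $\mu$ bit strings chosen independently and uniformly at random. In generation $t$: choose a parent $x\in P_t$ uniformly at random; create $y$ by flipping each bit of $x$ independently with probability $1/n$; let $P_t^*=P_t\cup\{y\}$; update the fitness values of $P_t^*$ by the clearing procedure: sort $P_t^*$ by decreasing fitness; for $i=1,\dots,|P_t^*|$, if the current fitness of $P[i]$ is positive, set $w:=1$ and for $j=i+1,\dots,|P_t^*|$: if the current fitness of $P[j]$ is positive and $\mathrm{d}(P[i],P[j])<\sigma$ then, if $w<\kappa$ set $w:=w+1$, else set the fitness of $P[j]$ to $0$. Individuals whose fitness is not reset are winners, the others are cleared. Then choose $z\in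 P_t$ with worst (cleared) fitness uniformly at random; if the (cleared) fitness of $y$ is at least that of $z$, set $P_{t+1}=P_t^*\setminus\{z\}$, otherwise $P_{t+1}=P_t^*\setminus\{y\}$. Genotypic clearing uses $\mathrm{d}=H$. *)

(* Defs.v *)
From mathcomp Require Import all_boot all_order all_algebra.
Set Implicit Arguments. Unset Strict Implicit. Unset Printing Implicit Defensive.
Import Order.TTheory GRing.Theory Num.Theory.
Local Open Scope ring_scope.

Definition bits (n : nat) := {ffun 'I_n -> bool}.
Definition bzero (n : nat) : bits n := [ffun => false].
Definition ham (n : nat) (x y : bits n) : nat := #|[pred i | x i != y i]|.

(* Clearing procedure on a population given as a list; individuals are
   identified by their positions.  Ties in the sort by decreasing fitness
   are broken stably (by position in the list). *)
Section Clearing.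
Variables (R : realFieldType) (T : Type) (x0 : T) (f : T -> R)
          (d : T -> T -> nat) (sigma kappa : nat).

Definition upd (cur : nat -> R) (j : nat) (v : R) : nat -> R :=
  fun k => if k == j then v else cur k.

Fixpoint clear_inner (s : seq T) (i : nat) (rest : seq nat) (w : nat)
    (cur : nat -> R) : nat -> R :=
  match rest with
  | [::] => cur
  | j :: rest' =>
      if (0 < cur j) && (d (nth x0 s i) (nth x0 s j) < sigma)%N then
        if (w < kappa)%N then clear_inner s i rest' w.+1 cur
        else clear_inner s i rest' w (upd cur j 0)
      else clear_inner s i rest' w cur
  end.

Fixpoint clear_outer (s : seq T) (ord : seq nat) (cur : nat -> R) : nat -> R :=
  match ord with
  | [::] => cur
  | i :: rest =>
      clear_outer s rest (if 0 < cur i then clear_inner s i rest 1 cur else cur)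
  end.

Definition sorted_idx (s : seq T) : seq nat :=
  sort (fun i j => f (nth x0 s j) <= f (nth x0 s i)) (iota 0 (size s)).

Definition cleared (s : seq T) : nat -> R :=
  clear_outer s (sorted_idx s) (fun k => f (nth x0 s k)).

(* winner = fitness not reset (fitness values are positive) *)
Definition winner (s : seq T) (k : nat) : bool := 0 < cleared s k.

Definition winners (s : seq T) : seq T :=
  [seq nth x0 s k | k <- iota 0 (size s) & winner s k].

End Clearing.

Section EA.
Variables (R : realFieldType) (n : nat) (f : bits n -> R) (sigma kappa : nat).

Definition mutprob (x y : bits n) : R :=
  (n%:R^-1) ^+ ham x y * (1 - n%:R^-1) ^+ (n - ham x y).

Definition rem_idx (Q : seq (bits n)) (z : nat) : seq (bits n) :=
  take z Q ++ drop z.+1 Q.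

Definition clearG (Q : seq (bits n)) : nat -> R :=
  cleared (bzero n) f (@ham n) sigma kappa Q.

Definition winnerG (Q : seq (bits n)) : nat -> bool :=
  winner (bzero n) f (@ham n) sigma kappa Q.

Definition winnersG (Q : seq (bits n)) : seq (bits n) :=
  winners (bzero n) f (@ham n) sigma kappa Q.

Definition worst_idx (P : seq (bits n)) (y : bits n) : seq nat :=
  let c := clearG (rcons P y) in
  [seq k <- iota 0 (size P) | all (fun k' => c k <= c k') (iota 0 (size P))].

Definition next_pop (P : seq (bits n)) (y : bits n) (z : nat) : seq (bits n) :=
  let c := clearG (rcons P y) in
  if c z <= c (size P) then rem_idx (rcons P y) z else P.

(* expectation of g(P_{t+1}) given offspring y (z uniform among worst) *)
Definition exp_given_y (g : seq (bits n) -> R) (P : seq (bits n)) (y : bits n) : R :=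
  (size (worst_idx P y))%:R^-1 * \sum_(z <- worst_idx P y) g (next_pop P y z).

Definition step_exp (g : seq (bits n) -> R) (P : seq (bits n)) : R :=
  \sum_(i < size P) (size P)%:R^-1 *
    \sum_(y : bits n) mutprob (nth (bzero n) P i) y * exp_given_y g P y.

End EA.

Definition phi (n : nat) (xs : bits n) (P : seq (bits n)) : nat :=
  sumn [seq ham x xs | x <- P].

(* Main.v *)
Require Import Defs.
From mathcomp Require Import all_boot all_order all_algebra.
From mathcomp Require Import zify ring lra.
Import Order.TTheory GRing.Theory Num.Theory.
Local Open Scope ring_scope.

Module Helpers.
Set Implicit Arguments. Unset Strict Implicit. Unset Printing Implicit Defensive.

Section ClrLemmas.
Variables (R : realFieldType) (T : Type) (x0 : T) (f : T -> R)
          (d : T -> T -> nat) (sigma kappa : nat).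
Implicit Types (s : seq T) (cur : nat -> R).

Local Notation ci := (clear_inner x0 d sigma kappa).
Local Notation co := (clear_outer x0 d sigma kappa).

Lemma ci_notin s i rest w cur k : k \notin rest -> ci s i rest w cur k = cur k.
Proof.
elim: rest w cur => [//|j rest IH] w cur /=.
rewrite in_cons negb_or => /andP[kj krest].
have Hu : upd cur j 0 k = cur k by rewrite /upd (negbTE kj).
by case: ifP => _; [case: ifP => _ |]; rewrite IH.
Qed.

Lemma ci_far s i rest w cur k :
  ~~ (d (nth x0 s i) (nth x0 s k) < sigma)%N -> ci s i rest w cur k = cur k.
Proof.
move=> Hfar; elim: rest w cur => [//|j rest IH] w cur /=.
case: ifP => [/andP[_ Hd]|_]; last exact: IH.
case: ifP => _; rewrite IH //.
rewrite /upd; case: eqP => // Ekj; by rewrite Ekj Hd in Hfar.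
Qed.

Lemma ci_small s i rest w cur :
  (w + count (fun j => (0 < cur j)%R) rest <= kappa)%N -> ci s i rest w cur = cur.
Proof.
elim: rest w => [//|j rest IH] w /=.
case: ifP => [/andP[Hp _]|Hn] Hc.
  rewrite Hp /= in Hc.
  have -> : (w < kappa)%N by lia.
  by apply: IH; lia.
apply: IH; move: Hc; case: (0 < cur j) => /=; lia.
Qed.


Lemma ci_all s i rest w cur :
  uniq rest ->
  all (fun j => (0 < cur j) && (d (nth x0 s i) (nth x0 s j) < sigma)%N) rest ->
  (w <= kappa)%N ->
  forall k, ci s i rest w cur k = if k \in drop (kappa - w) rest then 0 else cur k.
Proof.
elim: rest w cur => [|j rest IH] w cur /=.
  by move=> _ _ _ k.
move=> /andP[jnr ur] /andP[/andP[-> ->] Hall] Hw k /=.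
case: ltnP => Hwk.
  rewrite IH //.
  by have -> : (kappa - w = (kappa - w.+1).+1)%N by lia.
have Ew : w = kappa by apply/eqP; rewrite eqn_leq Hw Hwk.
rewrite IH //; last first.
  apply/allP => j' Hj'; have /andP[H1 H2] := allP Hall j' Hj'.
  rewrite /upd; case: eqP => [Ej|_]; last by rewrite H1.
  by rewrite -Ej Hj' in jnr.
rewrite Ew subnn !drop0 in_cons /upd.
by case: eqP => // _; case: (k \in rest).
Qed.

Lemma co_notin s ord cur k : k \notin ord -> co s ord cur k = cur k.
Proof.
elim: ord cur => [//|i ord IH] cur /=.
rewrite in_cons negb_or => /andP[ki kord].
rewrite IH //; case: ifP => // _; exact: ci_notin.
Qed.

Lemma co_small s ord cur :
  (count (fun j => (0 < cur j)%R) ord <= kappa)%N -> co s ord cur = cur.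
Proof.
elim: ord cur => [//|i ord IH] cur /=.
case: ifP => Hi Hc.
  rewrite ci_small; first by apply: IH; move: Hc; rewrite ?Hi; lia.
  by move: Hc; rewrite ?Hi.
by apply: IH; move: Hc; rewrite ?Hi.
Qed.

Lemma co_witness s ord cur k :
  uniq ord -> 0 < cur k -> ~~ (0 < co s ord cur k) ->
  exists2 i, i \in ord &
    (0 < co s ord cur i) && (d (nth x0 s i) (nth x0 s k) < sigma)%N.
Proof.
elim: ord cur => [|i ord IH] cur /=; first by move=> _ ->.
move=> /andP[inr uo] Hk.
set cur' := (if 0 < cur i then _ else _).
case Hk' : (0 < cur' k).
  move=> Hc; have [i' Hi' Hi'2] := IH cur' uo Hk' Hc.
  by exists i' => //; rewrite in_cons Hi' orbT.
move=> _.
move: Hk'; rewrite /cur'; case: ifP => Hi Hk'; last by rewrite Hk in Hk'.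
exists i; first by rewrite in_cons eqxx.
rewrite co_notin // ci_notin // Hi /=.
case: ltnP => // Hfar.
have Hfar' : ~~ (d (nth x0 s i) (nth x0 s k) < sigma)%N by rewrite -leqNgt.
by rewrite ci_far // Hk in Hk'.
Qed.

Lemma co_head s h rest cur :
  uniq (h :: rest) -> 0 < cur h -> (1 <= kappa)%N ->
  (forall j, j \in rest -> (0 < cur j) && (d (nth x0 s h) (nth x0 s j) < sigma)%N) ->
  forall k, co s (h :: rest) cur k =
            if k \in drop (kappa - 1) rest then 0 else cur k.
Proof.
move=> /= /andP[hnr ur] Hh Hk Hall k.
have Hall' : all (fun j => (0 < cur j) && (d (nth x0 s h) (nth x0 s j) < sigma)%N) rest.
  by apply/allP.
rewrite Hh co_small. exact: (ci_all ur Hall' Hk k).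
set c := ci s h rest 1 cur.
rewrite -(cat_take_drop (kappa - 1) rest) count_cat.
rewrite (@eq_in_count _ _ pred0 (drop (kappa - 1) rest)); last first.
  by move=> j Hj /=; rewrite /c ci_all ?Hj ?ltxx.
rewrite count_pred0 addn0.
apply: leq_trans (count_size _ _) _.
rewrite size_take_min; lia.
Qed.

End ClrLemmas.


Section Mut.
Variables (R : realFieldType) (n : nat).
Local Notation p := (n%:R^-1 : R).
Local Notation q := (1 - n%:R^-1 : R).

Definition Fm (x : bits n) (i : 'I_n) (b : bool) : R := if x i != b then p else q.

Lemma card_same (x y : bits n) :
  #|(fun i : 'I_n => ~~ (x i != y i))| = (n - ham x y)%N.
Proof.
rewrite /ham; have := cardC [pred i | x i != y i]; rewrite card_ord => E.
by rewrite -[X in _ = (X - _)%N]E addKn; apply: eq_card => i.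
Qed.

Lemma ham_le (x y : bits n) : (ham x y <= n)%N.
Proof. by rewrite /ham -[X in (_ <= X)%N]card_ord max_card. Qed.

Lemma ham_sym (x y : bits n) : ham x y = ham y x.
Proof. by apply: eq_card => i; rewrite !inE eq_sym. Qed.

Lemma ham_xx (x : bits n) : ham x x = 0%N.
Proof. by apply: eq_card0 => i; rewrite !inE eqxx. Qed.

Lemma ham_sum (y z : bits n) : (ham y z)%:R = \sum_j ((y j != z j)%:R : R).
Proof.
rewrite /ham -sum1_card natr_sum big_mkcond /=; apply: eq_bigr => j _.
by rewrite unfold_in /=; case: ifP.
Qed.

Lemma mut_prod (x y : bits n) : mutprob R x y = \prod_i Fm x i (y i).
Proof.
rewrite /mutprob /Fm (bigID (fun i => x i != y i)) /=.
rewrite (eq_bigr (fun=> p)); last by move=> i ->.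
rewrite [X in _ = _ * X](eq_bigr (fun=> q)); last by move=> i /negbTE ->.
by rewrite !prodr_const card_same.
Qed.

Lemma sumF (x : bits n) (i : 'I_n) : (0 < n)%N -> \sum_b Fm x i b = 1.
Proof.
move=> n0; rewrite /Fm big_bool /=.
by case: (x i) => /=; rewrite ?subrK // addrC subrK.
Qed.


Lemma sum_mut (x : bits n) : (0 < n)%N -> \sum_(y : bits n) mutprob R x y = 1.
Proof.
move=> n0; under eq_bigr do rewrite mut_prod.
rewrite -(bigA_distr_bigA (fun i b => Fm x i b)) /=.
by rewrite big1 // => i _; rewrite sumF.
Qed.

Lemma mut_ge0 (x y : bits n) : (0 < n)%N -> 0 <= mutprob R x y.
Proof.
move=> n0; rewrite /mutprob mulr_ge0 // exprn_ge0 //; first by rewrite invr_ge0 ler0n.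
by rewrite subr_ge0 invf_le1 // ?ler1n // ltr0n.
Qed.


Lemma marg (n0 : (0 < n)%N) (x : bits n) (j : 'I_n) (c : bool -> R) :
  \sum_(y : bits n) (\prod_i Fm x i (y i)) * c (y j) = \sum_b Fm x j b * c b.
Proof.
pose G i b := Fm x i b * (if i == j then c b else 1).
have E : forall y : bits n, (\prod_i Fm x i (y i)) * c (y j) = \prod_i G i (y i).
  move=> y; rewrite /G big_split /=; congr (_ * _).
  rewrite (bigD1 j) //= eqxx big1 ?mulr1 // => i /negbTE ->; done.
transitivity (\sum_(y : bits n) \prod_i G i (y i)).
  by apply: (@eq_bigr R 0 +%R (bits n)) => y _; exact: E.
rewrite -(bigA_distr_bigA G) /= (bigD1 j) //=.
have -> : \prod_(i < n | i != j) \sum_b G i b = 1.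
  apply: big1 => i /negbTE ij.
  rewrite /G ij; under eq_bigr do rewrite mulr1. exact: sumF.
rewrite mulr1.
by apply: (@eq_bigr R 0 +%R bool) => b _; rewrite /G eqxx.
Qed.

Lemma exp_ham (n0 : (0 < n)%N) (x xs : bits n) :
  \sum_(y : bits n) mutprob R x y * (ham y xs)%:R
  = (ham x xs)%:R * (1 - 2 / n%:R) + 1.
Proof.
transitivity (\sum_(j < n) \sum_(y : bits n) (\prod_i Fm x i (y i)) * ((y j != xs j)%:R)).
  rewrite exchange_big /=.
  apply: (@eq_bigr R 0 +%R (bits n)) => y _.
  by rewrite mut_prod ham_sum mulr_sumr.
transitivity (\sum_(j < n) (if x j == xs j then p else q)).
  apply: eq_bigr => j _; rewrite (marg n0 x j (fun b => (b != xs j)%:R)) big_bool /Fm.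
  by case: (x j); case: (xs j) => /=; rewrite ?mulr1 ?mulr0 ?addr0 ?add0r.
rewrite (bigID (fun j => x j != xs j)) /=.
rewrite (eq_bigr (fun=> q)); last by move=> i /=; case: eqP.
rewrite [X in _ + X = _](eq_bigr (fun=> p)); last by move=> i /=; case: eqP.
rewrite !sumr_const card_same.
have -> : #|(fun i : 'I_n => x i != xs i)| = ham x xs by apply: eq_card.
rewrite -[(1 - _) *+ _]mulr_natr -[(n%:R^-1) *+ _]mulr_natr natrB ?ham_le //.
have nz : n%:R != 0 :> R by rewrite pnatr_eq0 -lt0n.
move: (ham x xs)%:R (n%:R : R) nz => h m mz.
by field.
Qed.
Lemma exp_aff (n0 : (0 < n)%N) (x xs : bits n) (c : R) :
  \sum_(y : bits n) mutprob R x y * ((ham y xs)%:R - c)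
  = (ham x xs)%:R * (1 - 2 / n%:R) + 1 - c.
Proof.
transitivity (\sum_(y : bits n) (mutprob R x y * (ham y xs)%:R - mutprob R x y * c)).
  by apply: (@eq_bigr R 0 +%R (bits n)) => y _; rewrite mulrBr.
by rewrite sumrB -mulr_suml sum_mut // exp_ham // mul1r.
Qed.

End Mut.


Lemma phi_iota n (xs : bits n) (P : seq (bits n)) (R : realFieldType) :
  ((phi xs P)%:R : R) = \sum_(z <- iota 0 (size P)) (ham (nth (bzero n) P z) xs)%:R.
Proof.
rewrite /phi -{1}(mkseq_nth (bzero n) P) /mkseq -map_comp sumnE big_map natr_sum.
by [].
Qed.

Lemma phi_rem n (xs : bits n) (s : seq (bits n)) z : (z < size s)%N ->
  phi xs s = (phi xs (rem_idx s z) + ham (nth (bzero n) s z) xs)%N.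
Proof.
move=> zs; rewrite /phi /rem_idx -{1}(cat_take_drop z s) (drop_nth (bzero n)) //.
rewrite !map_cat !sumn_cat /=; lia.
Qed.

Lemma phi_rcons n (xs : bits n) (P : seq (bits n)) y :
  phi xs (rcons P y) = (phi xs P + ham y xs)%N.
Proof. by rewrite /phi -cats1 map_cat sumn_cat /= addn0. Qed.

Lemma count_win_le n (R : realFieldType) (f : bits n -> R) sigma kappa (P : seq (bits n)) xs :
  winnersG f sigma kappa P = nseq kappa xs ->
  (kappa <= count (fun j => nth (bzero n) P j == xs) (iota 0 (size P)))%N.
Proof.
move=> Hw.
have := congr1 (count (pred1 xs)) Hw.
rewrite count_nseq /= eqxx mul1n /winnersG /winners count_map count_filter => <-.
by apply: sub_count => j /andP[].
Qed.

Lemma sum_const_seq (R : realFieldType) (T : Type) (W : seq T) (c : R) :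
  \sum_(z <- W) c = c *+ size W.
Proof. by elim: W => [|a W IH]; rewrite ?big_nil ?big_cons ?IH ?mulrS. Qed.

Lemma alg1 (R : realFieldType) (a b c d : R) : b + c = a + d -> a - b = c - d.
Proof. by move=> H; lra. Qed.

Lemma alg2 (R : realFieldType) (a b m : R) : m != 0 -> m^-1 * (a * m - b) = a - b / m.
Proof. by move=> H; field. Qed.

Lemma egy (R : realFieldType) (n mu sigma kappa : nat) (f : bits n -> R)
    (P : seq (bits n)) (xs y : bits n) :
  (1 <= kappa)%N -> (kappa < mu)%N ->
  (forall x, 0 < f x) ->
  size P = mu ->
  winnersG f sigma kappa P = nseq kappa xs ->
  (forall x, x \in P -> (ham x xs < sigma)%N) ->
  (forall k, (k <= mu)%N -> winnerG f sigma kappa (rcons P y) k ->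
       nth (bzero n) (rcons P y) k = xs) ->
  exp_given_y f sigma kappa (fun Q => (phi xs Q)%:R - (phi xs P)%:R) P y
  = (ham y xs)%:R - (phi xs P)%:R / (mu - kappa)%:R.
Proof.
move=> k1 kmu fpos sP Hwin Hnear H8.
set s := rcons P y in H8 *.
have ss : size s = mu.+1 by rewrite size_rcons sP.
set ord := sorted_idx (bzero n) f s.
have Hperm : perm_eq ord (iota 0 mu.+1) by rewrite /ord /sorted_idx perm_sort ss.
have Huniq : uniq ord by rewrite (perm_uniq Hperm) iota_uniq.
have Hmem : forall k, (k \in ord) = (k < mu.+1)%N.
  by move=> k; rewrite (perm_mem Hperm) mem_iota.
set cur0 := fun k => f (nth (bzero n) s k).
have cpos : forall k, 0 < cur0 k by move=> k; exact: fpos.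
have Hc : forall k, clearG f sigma kappa s k = clear_outer (bzero n) (@ham n) sigma kappa s ord cur0 k by [].
have Hw : forall k, winnerG f sigma kappa s k = (0 < clearG f sigma kappa s k) by [].
case Eord : ord => [|h rest].
  by have := perm_size Hperm; rewrite Eord size_iota.
have hnr : h \notin rest by move: Huniq; rewrite Eord /= => /andP[].
have ur : uniq rest by move: Huniq; rewrite Eord /= => /andP[].
have hmu : (h < mu.+1)%N by rewrite -Hmem Eord mem_head.
have Hh : nth (bzero n) s h = xs.
  apply: (H8) => //; change (0 < clear_outer (bzero n) (@ham n) sigma kappa s ord cur0 h); rewrite Eord /= cpos co_notin // ci_notin //.
have sig0 : (0 < sigma)%N.
  have : nth (bzero n) P 0 \in P by rewrite mem_nth // sP; clear -k1 kmu; lia.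
  by move/Hnear => H; clear -H; lia.
have nthP : forall j, (j < mu)%N -> nth (bzero n) s j = nth (bzero n) P j.
  by move=> j jm; rewrite /s nth_rcons sP jm.
have nthy : nth (bzero n) s mu = y by rewrite /s nth_rcons sP ltnn eqxx.
have yn : (ham xs y < sigma)%N.
  case Wm : (winnerG f sigma kappa s mu).
    by have := H8 mu (leqnn _) Wm; rewrite -/s nthy => ->; rewrite ham_xx.
  move/negbT: Wm => Wm.
  have [i Hi /andP[Wi Hd]] := @co_witness R _ (bzero n) (@ham n) sigma kappa s ord cur0 mu Huniq (cpos mu) Wm.
  by rewrite nthy H8 // in Hd; rewrite -ltnS -Hmem.
have Hall : forall j, j \in rest ->
    (0 < cur0 j) && (ham (nth (bzero n) s h) (nth (bzero n) s j) < sigma)%N.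
  move=> j Hj; rewrite cpos Hh /=.
  have : nth (bzero n) s j \in s by rewrite mem_nth // ss -Hmem Eord in_cons Hj orbT.
  rewrite /s mem_rcons in_cons => /orP[/eqP -> //|/Hnear]; by rewrite ham_sym.
set D := drop (kappa - 1) rest.
have Hclr : forall k, clearG f sigma kappa s k = if k \in D then 0 else cur0 k.
  move=> k; rewrite Hc Eord; apply: co_head => //; by rewrite -Eord.
pose leT := (fun i j => f (nth (bzero n) s j) <= f (nth (bzero n) s i)).
pose r2 := (fun a b => leT a b && (leT b a ==> (a < b)%N)).
have r2tr : transitive r2.
  move=> b a c; rewrite /r2 /leT => /andP[H1 H2] /andP[H3 H4].
  rewrite (le_trans H3 H1) /=; apply/implyP => H5.
  have H6 : f (nth (bzero n) s a) <= f (nth (bzero n) s b) by apply: le_trans H5 H3.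
  have H7 : f (nth (bzero n) s b) <= f (nth (bzero n) s c) by apply: le_trans H1 H5.
  by apply: ltn_trans (implyP H2 H6) (implyP H4 H7).
have Hsorted : sorted r2 ord.
  have := @sort_stable nat leT ltn _ ltn_trans (iota 0 (size s)) (iota_ltn_sorted 0 _).
  apply.
  by move=> a b; rewrite /leT le_total.
have Hpw : pairwise r2 ord by rewrite -sorted_pairwise.
have mord : mu \in ord by rewrite Hmem.
set p := index mu ord.
have pl : (p < size ord)%N by rewrite index_mem.
have Esplit : ord = take p ord ++ mu :: drop p.+1 ord.
  have E1 : mu :: drop p.+1 ord = drop p ord by rewrite (drop_nth 0 pl) nth_index.
  by rewrite E1 cat_take_drop.
have fy : f y <= f xs.
  case: (eqVneq h mu) => [Ehm|Hhm]; first by rewrite -nthy -Ehm Hh.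
  have : mu \in rest by move: mord; rewrite Eord in_cons eq_sym (negbTE Hhm).
  move: Hpw; rewrite Eord /= => /andP[/allP Ha _] /Ha /andP[+ _].
  by rewrite /leT nthy Hh.
have Htake : forall j, (j < mu)%N -> nth (bzero n) P j == xs -> j \in take p ord.
  move=> j jm /eqP Ej.
  have : j \in ord by rewrite Hmem; clear -jm; lia.
  rewrite {1}Esplit mem_cat in_cons => /or3P[//| /eqP jmu | Hj]; first by clear -jm jmu; lia.
  exfalso; move: Hpw; rewrite Esplit pairwise_cat => /and3P[_ _ /= /andP[/allP Ha _]].
  have := Ha j Hj; rewrite /r2 /leT nthy (nthP j jm) Ej fy /= => /andP[_ H]; clear -H jm; lia.
have kp : (kappa <= p)%N.
  have := count_win_le Hwin; rewrite sP -size_filter => Hk.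
  apply: leq_trans Hk _.
  apply: (@leq_trans (size (take p ord))); last by rewrite size_take_min geq_minl.
  apply: uniq_leq_size; first by rewrite filter_uniq // iota_uniq.
  move=> j; rewrite mem_filter mem_iota => /andP[Ej jm]; apply: Htake => //; clear -jm; lia.
have hm : h != mu.
  apply/eqP => Ehm; have : p = 0%N by rewrite /p Eord -Ehm /= eqxx.
  clear -kp k1; lia.
have mr : mu \in rest by move: mord; rewrite Eord in_cons eq_sym (negbTE hm).
have pidx : p = (index mu rest).+1 by rewrite /p Eord /= (negbTE hm).
have muD : mu \in D.
  move: (mr); rewrite -{1}(cat_take_drop (kappa - 1) rest) mem_cat (in_take _ mr).
  case/orP => // H; clear -H pidx kp k1; lia.
have srest : size rest = mu.
  by have := perm_size Hperm; rewrite Eord size_iota /=; case.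
have hD : h \notin D by apply: contra hnr; exact: mem_drop.
have c1 : count (fun k => k \notin D) ord = kappa.
  rewrite Eord /= hD -(cat_take_drop (kappa - 1) rest) count_cat.
  rewrite (@eq_in_count _ _ pred0 D); last by move=> j /= ->.
  rewrite count_pred0 addn0.
  rewrite (@eq_in_count _ _ predT (take (kappa - 1) rest)); last first.
    move=> j Hj /=; apply/negP => HjD.
    move: ur; rewrite -(cat_take_drop (kappa - 1) rest) cat_uniq => /and3P[_ /hasPn H _].
    by have := H j HjD; rewrite /= Hj.
  by rewrite count_predT size_takel ?srest; clear -k1 kmu srest; lia.
have cnt : count (fun k => k \notin D) (iota 0 mu) = kappa.
  move: c1; rewrite (permP Hperm) -addn1 iotaD count_cat /= muD /=; clear -k1; lia.
have cD : count (fun k => k \in D) (iota 0 mu) = (mu - kappa)%N.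
  have := count_predC (fun k => k \in D) (iota 0 mu).
  rewrite size_iota.
  have -> : count (predC (fun k => k \in D)) (iota 0 mu) = count (fun k => k \notin D) (iota 0 mu) by [].
  rewrite cnt; clear -kmu; lia.
have c0 : forall k', 0 <= clearG f sigma kappa s k'.
  by move=> k'; rewrite Hclr; case: ifP => // _; exact: ltW (cpos k').
have [k0 Hk0 k0D] : exists2 k0, k0 \in iota 0 mu & k0 \in D.
  apply/hasP; rewrite has_count cD; clear -kmu; lia.
have Hwst : worst_idx f sigma kappa P y = [seq k <- iota 0 mu | k \in D].
  rewrite /worst_idx -/s sP; apply: eq_in_filter => k Hk.
  case kD: (k \in D).
    by apply/allP => k' _; rewrite (Hclr k) kD.
  apply/negbTE/negP => /allP /(_ k0 Hk0).
  by rewrite Hclr kD (Hclr k0) k0D leNgt cpos.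
have Hnext : {in [seq k <- iota 0 mu | k \in D], forall z,
    ((phi xs (next_pop f sigma kappa P y z))%:R - (phi xs P)%:R : R)
    = (ham y xs)%:R - (ham (nth (bzero n) P z) xs)%:R}.
  move=> z; rewrite mem_filter mem_iota => /andP[zD /andP[_ zm]].
  rewrite /next_pop -/s sP Hclr zD (Hclr mu) muD lexx.
  have E := phi_rem xs (s := s) (z := z); rewrite ss in E.
  have {}E := E (ltnW zm).
  rewrite /s phi_rcons -/s (nthP z zm) in E.
  have E' := congr1 (fun m => (m%:R : R)) E; rewrite /= !natrD in E'.
  by apply: alg1; exact: E'.
have Hwin0 : forall z, (z < mu)%N -> z \notin D -> ham (nth (bzero n) P z) xs = 0%N.
  move=> z zm zD; rewrite -nthP // H8 ?ham_xx //; first by clear -zm; lia.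
  change (0 < clearG f sigma kappa s z); rewrite Hclr (negbTE zD); exact: cpos.
have Hphi : \sum_(z <- [seq k <- iota 0 mu | k \in D]) ((ham (nth (bzero n) P z) xs)%:R : R)
            = (phi xs P)%:R.
  rewrite big_filter (phi_iota xs P R) sP [in RHS](bigID (fun k => k \in D)) /=.
  rewrite [X in _ = _ + X]big1_seq ?addr0 // => z /andP[zD].
  by rewrite mem_iota => /andP[_ zm]; rewrite Hwin0.
rewrite /exp_given_y Hwst size_filter cD (eq_big_seq _ Hnext) sumrB sum_const_seq Hphi.
rewrite size_filter cD.
have nz : (mu - kappa)%:R != 0 :> R by rewrite pnatr_eq0 subn_eq0 -ltnNge.
rewrite -[(ham y xs)%:R *+ _]mulr_natr.
exact: alg2.
Qed.

Lemma phi_ord n (xs : bits n) (P : seq (bits n)) (R : realFieldType) :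
  ((phi xs P)%:R : R) = \sum_(i < size P) (ham (nth (bzero n) P i) xs)%:R.
Proof.
rewrite phi_iota -(big_mkord xpredT (fun i => (ham (nth (bzero n) P i) xs)%:R)).
by rewrite /index_iota subn0.
Qed.

Lemma alg3 (R : realFieldType) (ph m kk nn : R) :
  m != 0 -> nn != 0 -> m - kk != 0 ->
  m^-1 * (ph * (1 - 2 / nn) + m - ph / (m - kk) * m)
  = 1 - ph / m * (2 / nn + kk / (m - kk)).
Proof. by move=> H1 H2 H3; field; rewrite H1 H2 H3. Qed.


End Helpers.
Import Helpers.

Theorem lemma4 (R : realFieldType) (n mu sigma kappa : nat) (f : bits n -> R)
    (P : seq (bits n)) (xs : bits n) :
  (0 < n)%N -> (1 <= kappa)%N -> (kappa < mu)%N ->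
  (forall x, 0 < f x) ->
  size P = mu ->
  winnersG f sigma kappa P = nseq kappa xs ->
  (forall x, x \in P -> (ham x xs < sigma)%N) ->
  (forall (i : nat) (y : bits n), (i < mu)%N ->
     0 < mutprob R (nth (bzero n) P i) y ->
     forall k, (k <= mu)%N -> winnerG f sigma kappa (rcons P y) k ->
       nth (bzero n) (rcons P y) k = xs) ->
  step_exp f sigma kappa (fun Q => (phi xs Q)%:R - (phi xs P)%:R) P
  = 1 - (phi xs P)%:R / mu%:R * (2 / n%:R + kappa%:R / (mu - kappa)%:R).
Proof.
move=> n0 k1 kmu fpos sP Hwin Hnear H8.
set c := ((phi xs P)%:R / (mu - kappa)%:R : R).
rewrite /step_exp.
transitivity (\sum_(i < size P) (size P)%:R^-1 *
   ((ham (nth (bzero n) P i) xs)%:R * (1 - 2 / n%:R) + 1 - c)).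
  apply: eq_bigr => i _; congr (_ * _).
  transitivity (\sum_(y : bits n) mutprob R (nth (bzero n) P i) y * ((ham y xs)%:R - c)).
    apply: (@eq_bigr R 0 +%R (bits n)) => y _.
    have := mut_ge0 R (nth (bzero n) P i) y n0; rewrite le0r => /orP [/eqP -> | Hp].
      by rewrite !mul0r.
    have im : (i < mu)%N by rewrite -sP ltn_ord.
    by rewrite (egy (mu := mu)) // => k; exact: H8 i y im Hp k.
  exact: exp_aff.
rewrite -mulr_sumr sumrB big_split /= -mulr_suml -phi_ord sumr_const card_ord sP.
rewrite sumr_const card_ord -[c *+ mu]mulr_natr /c natrB ?(ltnW kmu) //.
apply: alg3.
- by rewrite pnatr_eq0 -lt0n (ltn_trans k1 kmu).
- by rewrite pnatr_eq0 -lt0n.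
- by rewrite -natrB ?(ltnW kmu) // pnatr_eq0 subn_eq0 -ltnNge.
Qed.
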